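(* Let $N=U\oplus\langle 4\rangle\oplus E_8(2)$ and $N'=\langle 2\rangle\oplus U(2)\oplus E_8$. Then $$\mathcal{D}(N)/\mathrm{O}(N)\cong\mathcal{D}(N')/\mathrm{O}(N').$$
   Context: Lattice conventions: $U$ is the even unimodular lattice of signature $(1,1)$; $E_8$ is the negative definite root lattice; $\langle m\rangle$ is generated by a vector of norm $m$; $L(m)$ is $L$ with its bilinear form multiplied by the rational number $m$. For a lattice $N$ of signature $(2,n)$, $\mathcal{D}(N)=\{[\omega]\in\mathbb{P}(N\otimes\mathbb{C}) : \omega\cdot\omega=0,\ \omega\cdot\bar\omega>0\}$, with the action of the orthogonal group $\mathrm{O}(N)$. *)

(* Defs.v *)
From HB Require Import structures.
From mathcomp Require Import all_boot all_order all_algebra.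
From mathcomp Require Import complex.
From mathcomp Require Import all_classical all_reals all_analysis.
Set Implicit Arguments. Unset Strict Implicit. Unset Printing Implicit Defensive.
Import Order.TTheory GRing.Theory Num.Theory.
Import numFieldNormedType.Exports.
Local Open Scope classical_set_scope.
Local Open Scope ring_scope.

(** Even lattices are given by integral Gram matrices on Z^n (column vectors). *)

(** Edges of the E8 Dynkin diagram (0-indexed, Bourbaki numbering). *)
Definition e8_edge (i j : nat) : bool :=
  [|| (i, j) == (0, 2)%N, (i, j) == (2, 3)%N, (i, j) == (3, 4)%N,
      (i, j) == (4, 5)%N, (i, j) == (5, 6)%N, (i, j) == (6, 7)%N
    | (i, j) == (1, 3)%N].

(** Entries of the NEGATIVE definite E8 root lattice Gram matrix. *)
Definition e8_entry (i j : nat) : int :=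
  if i == j then (-2)%R else if e8_edge i j || e8_edge j i then 1 else 0.

(** N = U + <4> + E8(2): indices 0,1 = U ; 2 = <4> ; 3..10 = E8(2). *)
Definition gramN : 'M[int]_11 :=
  \matrix_(i < 11, j < 11)
    if ((i < 2) && (j < 2))%N then (if (i == j :> nat) then 0 else 1)
    else if ((i == 2 :> nat) && (j == 2 :> nat)) then 4
    else if ((3 <= i) && (3 <= j))%N then 2 * e8_entry (i - 3) (j - 3)
    else 0.

(** N' = <2> + U(2) + E8: index 0 = <2> ; 1,2 = U(2) ; 3..10 = E8. *)
Definition gramN' : 'M[int]_11 :=
  \matrix_(i < 11, j < 11)
    if ((i == 0 :> nat) && (j == 0 :> nat)) then 2
    else if [&& (1 <= i)%N, (i < 3)%N, (1 <= j)%N & (j < 3)%N]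
         then (if (i == j :> nat) then 0 else 2)
    else if ((3 <= i) && (3 <= j))%N then e8_entry (i - 3) (j - 3)
    else 0.

Section Period.
Variables (R : realType) (n : nat).
Definition Cx : numFieldType := R[i].
Local Notation C := Cx.

Definition orth_group (G : 'M[int]_n) : set 'M[int]_n :=
  [set g | g \in unitmx /\ g^T *m G *m g = G].

Definition gramC (G : 'M[int]_n) : 'M[C]_n := map_mx (fun z : int => z%:~R) G.

Definition bil (G : 'M[int]_n) (v w : 'cV[C]_n) : C := (v^T *m gramC G *m w) 0 0.

(** Affine cone over the period domain D(L):
    nonzero w with w.w = 0 and w.(conj w) > 0. *)
Definition period_cone (G : 'M[int]_n) : set 'cV[C]_n :=
  [set w | bil G w w = 0 /\ 0 < bil G w (map_mx (fun z : C => z^*) w)].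

(** Two points of the cone define the same point of D(L)/O(L):
    w' = lambda * g w with lambda in C^* and g in O(L). *)
Definition orb_equiv (G : 'M[int]_n) (w w' : 'cV[C]_n) : Prop :=
  exists (lam : C) (g : 'M[int]_n),
    lam != 0 /\ orth_group G g /\ w' = lam *: (map_mx (fun z : int => z%:~R) g *m w).

Definition holo_on (f : 'cV[C]_n -> 'cV[C]_n) (U : set 'cV[C]_n) : Prop :=
  forall x, U x -> differentiable f x.

(** D(L)/O(L) and D(L')/O(L') are isomorphic: there are mutually inverse maps
    between the quotients, both induced by holomorphic maps (defined on open
    neighbourhoods of the affine cones over the period domains). *)
Definition period_quotients_isomorphic (G G' : 'M[int]_n) : Prop :=
  exists (Phi Psi : 'cV[C]_n -> 'cV[C]_n) (U V : set 'cV[C]_n),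
    [/\ open U, open V, period_cone G `<=` U & period_cone G' `<=` V] /\
    [/\ holo_on Phi U, holo_on Psi V,
        (forall w, period_cone G w -> period_cone G' (Phi w)) &
        (forall w, period_cone G' w -> period_cone G (Psi w))] /\
    [/\ (forall w w', period_cone G w -> period_cone G w' ->
           orb_equiv G w w' -> orb_equiv G' (Phi w) (Phi w')),
        (forall w w', period_cone G' w -> period_cone G' w' ->
           orb_equiv G' w w' -> orb_equiv G (Psi w) (Psi w')),
        (forall w, period_cone G w -> orb_equiv G w (Psi (Phi w))) &
        (forall w, period_cone G' w -> orb_equiv G' w (Phi (Psi w)))].

End Period.

(* Main.v *)
Require Import Defs.
From HB Require Import structures.
From mathcomp Require Import all_boot all_order all_algebra.
From mathcomp Require Import complex.
From mathcomp Require Import all_classical all_reals all_analysis.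
From mathcomp Require Import zify.
Set Implicit Arguments. Unset Strict Implicit. Unset Printing Implicit Defensive.
Import Order.TTheory GRing.Theory Num.Theory.
Import numFieldNormedType.Exports.
Local Open Scope ring_scope.

Definition sum11 (F : nat -> int) : int := foldr (fun k acc => F k + acc) 0 (iota 0 11).
Definition fmx := nat -> nat -> int.
Definition mx (f : fmx) : 'M[int]_11 := \matrix_(i < 11, j < 11) f i j.
Definition fmul (f g : fmx) : fmx := fun i j => sum11 (fun k => f i k * g k j).
Definition ftr (f : fmx) : fmx := fun i j => f j i.
Definition chk2 (P : nat -> nat -> bool) : bool :=
  all (fun a => all (P a) (iota 0 11)) (iota 0 11).

Lemma chk2P P : chk2 P -> forall i j : 'I_11, P i j.
Proof.
move=> H i j.
have Hi : (i:nat) \in iota 0 11 by rewrite mem_iota ltn_ord.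
have Hj : (j:nat) \in iota 0 11 by rewrite mem_iota ltn_ord.
by move/allP: H => /(_ _ Hi) /allP /(_ _ Hj).
Qed.

Lemma big_foldr_int (s : seq nat) (F : nat -> int) :
  \sum_(k <- s) F k = foldr (fun k acc => F k + acc) 0 s.
Proof. by elim: s => [|a s IH]; rewrite ?big_nil ?big_cons ?IH. Qed.

Lemma sum11E (F : nat -> int) : \sum_(k < 11) F k = sum11 F.
Proof. by rewrite -(big_mkord xpredT F) /index_iota subn0 big_foldr_int. Qed.

Lemma mxM f g : mx f *m mx g = mx (fmul f g).
Proof.
apply/matrixP => i j; rewrite !mxE /fmul -sum11E.
by apply: eq_bigr => k _; rewrite !mxE.
Qed.

Lemma mxT f : (mx f)^T = mx (ftr f).
Proof. by apply/matrixP => i j; rewrite !mxE. Qed.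

Lemma mx_eq f g : chk2 (fun a b => f a b == g a b) -> mx f = mx g.
Proof. by move=> H; apply/matrixP => i j; rewrite !mxE; apply/eqP/(chk2P H). Qed.

Definition sig (n : nat) : nat :=
  if n == 0%N then 2%N else if n == 1%N then 0%N else if n == 2%N then 1%N else n.
Definition tau (n : nat) : nat :=
  if n == 2%N then 0%N else if n == 0%N then 1%N else if n == 1%N then 2%N else n.
Definition half (n : nat) : bool := (n == 0%N) || (3 <= n)%N.
Definition fA : fmx := fun i k => if k == sig i then (if half i then 2 else 1) else 0.
Definition fB : fmx := fun i k => if k == tau i then (if half k then 1 else 2) else 0.
Definition fI2 : fmx := fun i j => if i == j then 2 else 0.

Definition gN : fmx := fun i j =>
    if ((i < 2) && (j < 2))%N then (if (i == j :> nat) then 0 else 1)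
    else if ((i == 2 :> nat) && (j == 2 :> nat)) then 4
    else if ((3 <= i) && (3 <= j))%N then 2 * e8_entry (i - 3) (j - 3)
    else 0.
Definition gN' : fmx := fun i j =>
    if ((i == 0 :> nat) && (j == 0 :> nat)) then 2
    else if [&& (1 <= i)%N, (i < 3)%N, (1 <= j)%N & (j < 3)%N]
         then (if (i == j :> nat) then 0 else 2)
    else if ((3 <= i) && (3 <= j))%N then e8_entry (i - 3) (j - 3)
    else 0.

Lemma gramNE : gramN = mx gN. Proof. by apply/matrixP => i j; rewrite !mxE. Qed.
Lemma gramN'E : gramN' = mx gN'. Proof. by apply/matrixP => i j; rewrite !mxE. Qed.

Lemma AB : mx fA *m mx fB = mx fI2.
Proof. rewrite mxM; apply: mx_eq. by vm_compute. Qed.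
Lemma BA : mx fB *m mx fA = mx fI2.
Proof. rewrite mxM; apply: mx_eq. by vm_compute. Qed.
Lemma BGB : (mx fB)^T *m mx gN *m mx fB = mx (fun i j => 2 * gN' i j).
Proof. rewrite mxT !mxM; apply: mx_eq. by vm_compute. Qed.
Lemma AGA : (mx fA)^T *m mx gN' *m mx fA = mx (fun i j => 2 * gN i j).
Proof. rewrite mxT !mxM; apply: mx_eq. by vm_compute. Qed.

Lemma rowdelta (X M : 'M[int]_11) (i j : 'I_11) (a : nat) (c : int) :
  (a < 11)%N -> (forall m : 'I_11, X i m = if (m : nat) == a then c else 0) ->
  (X *m M) i j = c * M (inord a) j.
Proof.
move=> Ha HX; rewrite mxE (bigD1 (inord a)) //= big1 ?addr0.
  by rewrite HX inordK // eqxx.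
move=> m Hm; rewrite HX; case: eqP => [Em|]; last by rewrite mul0r.
by move: Hm; rewrite -Em inord_val eqxx.
Qed.

Lemma coldelta (X M : 'M[int]_11) (i j : 'I_11) (a : nat) (c : int) :
  (a < 11)%N -> (forall m : 'I_11, X m j = if (m : nat) == a then c else 0) ->
  (M *m X) i j = M i (inord a) * c.
Proof.
move=> Ha HX; rewrite mxE (bigD1 (inord a)) //= big1 ?addr0.
  by rewrite HX inordK // eqxx.
move=> m Hm; rewrite HX; case: eqP => [Em|]; last by rewrite mulr0.
by move: Hm; rewrite -Em inord_val eqxx.
Qed.

Lemma coleven (X M : 'M[int]_11) (i j : 'I_11) :
  (forall m : 'I_11, (2 %| X m j)%Z) -> (2 %| (M *m X) i j)%Z.
Proof.
move=> H; rewrite mxE; apply: rpred_sum => m _.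
exact: dvdz_mull.
Qed.

Lemma chk2I (Q P : nat -> nat -> bool) : chk2 (fun a b => Q a b ==> P a b) ->
  forall i j : 'I_11, Q i j -> P i j.
Proof. by move=> H i j; move/implyP: (chk2P H i j). Qed.

Definition chk1 (P : nat -> bool) : bool := all P (iota 0 11).
Lemma chk1P P : chk1 P -> forall i : 'I_11, P i.
Proof. by move=> /allP H i; apply: H; rewrite mem_iota ltn_ord. Qed.

Lemma P1 (g : 'M[int]_11) : g \in unitmx -> g^T *m gramN *m g = gramN ->
  forall r c : 'I_11, (r < 2)%N -> (2 <= c)%N -> (2 %| g r c)%Z.
Proof.
move=> gu gG.
have E : gramN *m g = (invmx g)^T *m gramN.
  by rewrite -{2}gG !mulmxA -trmx_mul mulmxV // trmx1 mul1mx.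
have Hev : forall c : 'I_11, (2 <= c)%N -> (2 %| ((invmx g)^T *m gramN) (inord 0) c)%Z.
  move=> c Hc; apply: coleven => m; rewrite gramNE mxE.
  exact: (@chk2I (fun m c => 2 <= c)%N (fun m c => 2 %| gN m c)%Z (erefl true) m c Hc).
have R0 : forall m : 'I_11, gramN (inord 0) m = if (m:nat) == 1%N then 1 else 0.
  rewrite gramNE => m; rewrite mxE inordK //; apply/eqP; move: m.
  exact: (@chk1P (fun m => gN 0 m == if m == 1%N then 1 else 0) (erefl true)).
have R1 : forall m : 'I_11, gramN (inord 1) m = if (m:nat) == 0%N then 1 else 0.
  rewrite gramNE => m; rewrite mxE inordK //; apply/eqP; move: m.
  exact: (@chk1P (fun m => gN 1 m == if m == 0%N then 1 else 0) (erefl true)).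
have Hev1 : forall c : 'I_11, (2 <= c)%N -> (2 %| ((invmx g)^T *m gramN) (inord 1) c)%Z.
  move=> c Hc; apply: coleven => m; rewrite gramNE mxE.
  exact: (@chk2I (fun m c => 2 <= c)%N (fun m c => 2 %| gN m c)%Z (erefl true) m c Hc).
move=> r c; case: r => [[|[|r]] Hr] //= _ Hc.
- have := Hev1 c Hc; rewrite -E (rowdelta _ _ _ R1) // mul1r.
  by have -> : (inord 0 : 'I_11) = Ordinal Hr by apply/val_inj; rewrite /= inordK.
- have := Hev c Hc; rewrite -E (rowdelta _ _ _ R0) // mul1r.
  by have -> : (inord 1 : 'I_11) = Ordinal Hr by apply/val_inj; rewrite /= inordK.
Qed.

Definition e8inv (a b : nat) : int :=
  nth 0 (nth [::] [:: [:: -4; -5; -7; -10; -8; -6; -4; -2];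
   [:: -5; -8; -10; -15; -12; -9; -6; -3]; [:: -7; -10; -14; -20; -16; -12; -8; -4];
   [:: -10; -15; -20; -30; -24; -18; -12; -6]; [:: -8; -12; -16; -24; -20; -15; -10; -5];
   [:: -6; -9; -12; -18; -15; -12; -8; -4]; [:: -4; -6; -8; -12; -10; -8; -6; -3];
   [:: -2; -3; -4; -6; -5; -4; -3; -2]] a) b.
Definition fW : fmx := fun a b => if ((3 <= a) && (3 <= b))%N then e8inv (a - 3) (b - 3) else 0.
Definition fD : fmx := fun a b => if (a == b) && (3 <= a)%N then 1 else 0.

Lemma WG : mx fW *m mx gN' = mx fD.
Proof. rewrite mxM; apply: mx_eq. by vm_compute. Qed.

Lemma ord_inord (i : 'I_11) : inord (nat_of_ord i) = i.
Proof. exact: inord_val. Qed.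

Lemma quad_arith (x0 x1 x2 k0 k1 k2 S : int) :
  k0 * 2 = 2 * x0 -> k1 * 2 = 2 * x2 -> k2 * 2 = 2 * x1 ->
  k0 * x0 + (k1 * x1 + (k2 * x2 + S)) = 0 -> (2 %| S)%Z -> (2 %| x0)%Z.
Proof.
move=> H0 H1 H2.
have -> : k0 = x0 by lia.
have -> : k1 = x2 by lia.
have -> : k2 = x1 by lia.
move=> Z SE.
have Z' : x0 * x0 = - (2 * (x1 * x2)) - S by lia.
move: SE; clear -Z'; nia.
Qed.

Lemma P2 (h : 'M[int]_11) : h \in unitmx -> h^T *m gramN' *m h = gramN' ->
  forall i j : 'I_11, half i -> (j == 1 :> nat) || (j == 2 :> nat) -> (2 %| h i j)%Z.
Proof.
move=> hu hG.
have E : gramN' *m h = (invmx h)^T *m gramN'.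
  by rewrite -{2}hG !mulmxA -trmx_mul mulmxV // trmx1 mul1mx.
have Hcol : forall j : 'I_11, (j == 1 :> nat) || (j == 2 :> nat) ->
    forall m : 'I_11, (2 %| ((invmx h)^T *m gramN') m j)%Z.
  move=> j Hj m; apply: coleven => m'; rewrite gramN'E mxE.
  exact: (@chk2I (fun m c => (c == 1) || (c == 2))%N (fun m c => 2 %| gN' m c)%Z (erefl true) m' j Hj).
have S1 : forall i j : 'I_11, (3 <= i)%N -> (j == 1 :> nat) || (j == 2 :> nat) -> (2 %| h i j)%Z.
  move=> i j Hi Hj.
  have HD : forall m : 'I_11, mx fD i m = if (m:nat) == i then 1 else 0.
    by move=> m; rewrite mxE /fD Hi andbT eq_sym.
  have := rowdelta h j (ltn_ord i) HD; rewrite mul1r ord_inord => <-.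
  rewrite -WG -mulmxA -gramN'E E; exact: coleven (Hcol j Hj).
move=> i j /orP[/eqP Hi0|Hi] Hj; last exact: S1.
have Ea : (3 - j < 11)%N by case/orP: Hj => /eqP ->.
set a : 'I_11 := inord (3 - j).
have Cj : forall m : 'I_11, gramN' m j = if (m:nat) == (3 - j)%N then 2 else 0.
  move=> m; rewrite gramN'E mxE; apply/eqP.
  exact: (@chk2I (fun m c => (c == 1) || (c == 2))%N
     (fun m c => gN' m c == if m == (3 - c)%N then 2 else 0) (erefl true) m j Hj).
have Rw : forall (r c : nat) (v : int), (r < 11)%N -> (c < 11)%N ->
    (forall m : 'I_11, gN' r m = if (m:nat) == c then v else 0) ->
    (gramN' *m h) (inord r) j = v * h (inord c) j.
  move=> r c v Hr Hc Hrow; apply: rowdelta => // m; rewrite gramN'E mxE inordK //.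
have R0 : forall m : 'I_11, gN' 0 m = if (m:nat) == 0%N then 2 else 0.
  move=> m; apply/eqP; move: m.
  exact: (@chk1P (fun m => gN' 0 m == if m == 0%N then 2 else 0) (erefl true)).
have R1 : forall m : 'I_11, gN' 1 m = if (m:nat) == 2%N then 2 else 0.
  move=> m; apply/eqP; move: m.
  exact: (@chk1P (fun m => gN' 1 m == if m == 2%N then 2 else 0) (erefl true)).
have R2 : forall m : 'I_11, gN' 2 m = if (m:nat) == 1%N then 2 else 0.
  move=> m; apply/eqP; move: m.
  exact: (@chk1P (fun m => gN' 2 m == if m == 1%N then 2 else 0) (erefl true)).
have Kc : forall r : nat, (r < 11)%N ->
    ((invmx h)^T *m gramN') (inord r) j = invmx h a (inord r) * 2.
  move=> r Hr; rewrite (@coldelta _ _ (inord r) j _ _ Ea Cj) mxE //.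
have H0 := Rw 0%N 0%N 2 isT isT R0; rewrite E Kc // in H0.
have H1 := Rw 1%N 2%N 2 isT isT R1; rewrite E Kc // in H1.
have H2 := Rw 2%N 1%N 2 isT isT R2; rewrite E Kc // in H2.
have Z : (invmx h *m h) a j = 0.
  rewrite mulVmx // mxE /a; case: eqP => // /(congr1 val) /=; rewrite inordK //.
  by case/orP: Hj => /eqP ->.
rewrite mxE big_ord_recl big_ord_recl big_ord_recl in Z.
set S := \sum_(i < 8) _ in Z.
have SE : (2 %| S)%Z.
  apply: rpred_sum => m _; apply: dvdz_mull; apply: S1 => //.
have -> : i = inord 0 by apply/val_inj; rewrite /= inordK // Hi0.
have e0 : (ord0 : 'I_11) = inord 0 by apply/val_inj; rewrite /= inordK.
have e1 : (lift ord0 (ord0 : 'I_10)) = inord 1 by apply/val_inj; rewrite /= inordK.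
have e2 : (lift ord0 (lift ord0 (ord0 : 'I_9))) = inord 2 by apply/val_inj; rewrite /= inordK.
rewrite e2 e1 e0 in Z.
exact: (quad_arith H0 H1 H2 Z SE).
Qed.

Lemma cancel2 (M1 M2 : 'M[int]_11) : 2 *: M1 = 2 *: M2 -> M1 = M2.
Proof.
move=> /matrixP H; apply/matrixP => i j; have := H i j; rewrite !mxE; exact: mulfI.
Qed.

Lemma transport (X Y G1 G2 g : 'M[int]_11) :
  X *m Y = 2%:M -> Y *m X = 2%:M ->
  X^T *m G2 *m X = 2 *: G1 -> Y^T *m G1 *m Y = 2 *: G2 ->
  g \in unitmx -> g^T *m G1 *m g = G1 ->
  (forall i j, (2 %| (X *m g *m Y) i j)%Z) ->
  exists Q : 'M[int]_11, [/\ Q \in unitmx, Q^T *m G2 *m Q = G2 & Q *m X = X *m g].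
Proof.
move=> XY YX XG YG gu gG Hev.
pose Q : 'M[int]_11 := \matrix_(i, j) ((X *m g *m Y) i j %/ 2)%Z.
have QE : 2 *: Q = X *m g *m Y.
  apply/matrixP => i j; rewrite [(2 *: Q) i j]mxE [Q i j]mxE mulrC divzK //; exact: Hev.
exists Q; split.
- have Hd : 2 ^+ 11 * \det Q = 2 ^+ 11 * \det g.
    rewrite -detZ QE !det_mulmx mulrAC -det_mulmx XY det_scalar mulrC //.
  have H2 : (2:int) ^+ 11 != 0 by [].
  by rewrite unitmxE (mulfI H2 Hd) -unitmxE.
- apply: cancel2; apply: cancel2.
  rewrite [2 *: (2 *: G2)]scalerA.
  have -> : 2 *: (2 *: (Q^T *m G2 *m Q)) = (2 *: Q)^T *m G2 *m (2 *: Q).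
    have -> : (2 *: Q)^T = 2 *: Q^T by apply/matrixP => i j; rewrite !mxE.
    by rewrite -!scalemxAl -scalemxAr.
  rewrite QE.
  have -> : (X *m g *m Y)^T *m G2 *m (X *m g *m Y) =
      Y^T *m (g^T *m (X^T *m G2 *m X) *m g) *m Y by rewrite !trmx_mul !mulmxA.
  rewrite XG -scalemxAr -scalemxAl -scalemxAr -scalemxAl gG YG scalerA //.
- apply: cancel2.
  rewrite scalemxAl QE -mulmxA YX mul_mx_scalar //.
Qed.

Lemma even3 (X M Y : 'M[int]_11) :
  (forall i k l j, [|| (2 %| X i k)%Z, (2 %| M k l)%Z | (2 %| Y l j)%Z]) ->
  forall i j, (2 %| (X *m M *m Y) i j)%Z.
Proof.
move=> H i j; rewrite mxE; apply: rpred_sum => l _; rewrite mxE mulr_suml.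
apply: rpred_sum => k _; case/or3P: (H i k l j) => h.
- exact: dvdz_mulr (dvdz_mulr _ h).
- exact: dvdz_mulr (dvdz_mull _ h).
- exact: dvdz_mull h.
Qed.

Lemma I2E : mx fI2 = 2%:M.
Proof.
apply/matrixP => i j; rewrite !mxE /fI2.
have -> : (nat_of_ord i == nat_of_ord j) = (i == j) by [].
by case: (i == j).
Qed.

Lemma AB2 : mx fA *m mx fB = 2%:M. Proof. by rewrite AB I2E. Qed.
Lemma BA2 : mx fB *m mx fA = 2%:M. Proof. by rewrite BA I2E. Qed.
Lemma AGA2 : (mx fA)^T *m gramN' *m mx fA = 2 *: gramN.
Proof. by rewrite gramNE gramN'E AGA; apply/matrixP => i j; rewrite !mxE. Qed.
Lemma BGB2 : (mx fB)^T *m gramN *m mx fB = 2 *: gramN'.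
Proof. by rewrite gramNE gramN'E BGB; apply/matrixP => i j; rewrite !mxE. Qed.

Lemma evenQ (g : 'M[int]_11) : g \in unitmx -> g^T *m gramN *m g = gramN ->
  forall i j, (2 %| (mx fA *m g *m mx fB) i j)%Z.
Proof.
move=> gu gG; apply: even3 => i k l j; rewrite !mxE.
have hA := @chk2P (fun i k => (2 %| fA i k)%Z || (k < 2)%N) (erefl true) i k.
have hB := @chk2P (fun l j => (2 %| fB l j)%Z || (2 <= l)%N) (erefl true) l j.
case/orP: hA => [->//|hk]; case/orP: hB => [->|hl]; first by rewrite !orbT.
by rewrite (P1 gu gG hk hl) orbT.
Qed.

Lemma evenR (h : 'M[int]_11) : h \in unitmx -> h^T *m gramN' *m h = gramN' ->
  forall i j, (2 %| (mx fB *m h *m mx fA) i j)%Z.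
Proof.
move=> hu hG; apply: even3 => i k l j; rewrite !mxE.
have hB := @chk2P (fun i k => (2 %| fB i k)%Z || half k) (erefl true) i k.
have hA := @chk2P (fun l j => (2 %| fA l j)%Z || ((l == 1) || (l == 2))%N) (erefl true) l j.
case/orP: hB => [->//|hk]; case/orP: hA => [->|hl]; first by rewrite !orbT.
by rewrite (P2 hu hG hk hl) orbT.
Qed.

Section Cplx.
Variable R : realType.
Local Notation C := (Cx R).

Definition mapC (M : 'M[int]_11) : 'M[C]_11 := map_mx (fun z : int => z%:~R) M.

Lemma mapCM (M1 M2 : 'M[int]_11) : mapC (M1 *m M2) = mapC M1 *m mapC M2.
Proof. by rewrite /mapC map_mxM. Qed.

Lemma mapCT (M : 'M[int]_11) : mapC M^T = (mapC M)^T.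
Proof. by rewrite /mapC map_trmx. Qed.

Lemma mapCZ (M : 'M[int]_11) : mapC (2 *: M) = 2 *: mapC M.
Proof. by apply/matrixP => i j; rewrite !mxE intrM. Qed.

Lemma mapC2 : mapC 2%:M = 2%:M.
Proof. by apply/matrixP => i j; rewrite !mxE; case: (i == j). Qed.

Lemma mapC1 : mapC 1%:M = 1%:M.
Proof. by apply/matrixP => i j; rewrite !mxE; case: (i == j). Qed.

Lemma conj_mapC (M : 'M[int]_11) (w : 'cV[C]_11) :
  map_mx (fun z : C => z^*) (mapC M *m w) = mapC M *m map_mx (fun z : C => z^*) w.
Proof.
apply/matrixP => i j; rewrite !mxE rmorph_sum; apply: eq_bigr => k _.
by rewrite !mxE rmorphM /= rmorph_int.
Qed.

Lemma bil_map (G1 G2 X : 'M[int]_11) (w v : 'cV[C]_11) :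
  X^T *m G2 *m X = 2 *: G1 ->
  bil G2 (mapC X *m w) (mapC X *m v) = 2 * bil G1 w v.
Proof.
move=> XG; rewrite /bil /gramC -/(mapC G2) -/(mapC G1) trmx_mul.
have -> : w^T *m (mapC X)^T *m mapC G2 *m (mapC X *m v) =
   w^T *m mapC (X^T *m G2 *m X) *m v by rewrite !mapCM mapCT !mulmxA.
by rewrite XG mapCZ -scalemxAr -scalemxAl mxE.
Qed.

Lemma cone_map (G1 G2 X : 'M[int]_11) (w : 'cV[C]_11) :
  X^T *m G2 *m X = 2 *: G1 -> period_cone G1 w -> period_cone G2 (mapC X *m w).
Proof.
move=> XG [H1 H2]; split; first by rewrite (@bil_map G1 G2 X) // H1 mulr0.
by rewrite conj_mapC (@bil_map G1 G2 X) // mulr_gt0 // ltr0n.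
Qed.

Lemma holo_mul (M : 'M[C]_11) : holo_on (fun w : 'cV[C]_11 => M *m w) setT.
Proof.
move=> x _.
have -> : (fun w : 'cV[C]_11 => M *m w) =
    \sum_(k < 11) (fun w : 'cV[C]_11 => w k 0 *: col k M).
  apply/funext => w; rewrite fct_sumE; apply/matrixP => i j.
  rewrite !mxE summxE; apply: eq_bigr => k _; rewrite !mxE (ord1 j) mulrC.
  done.
apply: differentiable_sum => k; apply: differentiableZl.
exact: differentiable_coord.
Qed.

End Cplx.

Lemma orb_map (R : realType) (G1 G2 X Y : 'M[int]_11) (w w' : 'cV[Cx R]_11) :
  X *m Y = 2%:M -> Y *m X = 2%:M ->
  X^T *m G2 *m X = 2 *: G1 -> Y^T *m G1 *m Y = 2 *: G2 ->
  (forall g, g \in unitmx -> g^T *m G1 *m g = G1 ->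
     forall i j, (2 %| (X *m g *m Y) i j)%Z) ->
  orb_equiv G1 w w' -> orb_equiv G2 (mapC R X *m w) (mapC R X *m w').
Proof.
move=> XY YX XG YG Hev [lam [g [l0 [[gu gG] ->]]]].
have [Q [Qu QG QX]] := transport XY YX XG YG gu gG (Hev g gu gG).
exists lam, Q; split => //; split => //.
rewrite -scalemxAr mulmxA; congr (_ *: _).
rewrite -[map_mx _ g]/(mapC R g) -[map_mx _ Q]/(mapC R Q).
by rewrite mulmxA -!mapCM QX.
Qed.

Lemma orb_back (R : realType) (G1 X Y : 'M[int]_11) (w : 'cV[Cx R]_11) :
  Y *m X = 2%:M -> orb_equiv G1 w (mapC R Y *m (mapC R X *m w)).
Proof.
move=> YX; exists 2, 1%:M; split; first by rewrite pnatr_eq0.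
split; first by split; [exact: unitmx1 | rewrite trmx1 mul1mx mulmx1].
rewrite -[map_mx _ 1%:M]/(mapC R 1%:M) mapC1 mul1mx mulmxA -mapCM YX mapC2.
by rewrite mul_scalar_mx.
Qed.

Theorem theorem6p2 (R : realType) : period_quotients_isomorphic R gramN gramN'.
Proof.
exists (fun w => mapC R (mx fA) *m w), (fun w => mapC R (mx fB) *m w), setT, setT.
split; first by split => //; exact: openT.
split; first split.
- exact: holo_mul.
- exact: holo_mul.
- move=> w; exact: cone_map AGA2.
- move=> w; exact: cone_map BGB2.
split.
- move=> w w' _ _; apply: orb_map AB2 BA2 AGA2 BGB2 _; exact: evenQ.
- move=> w w' _ _; apply: orb_map BA2 AB2 BGB2 AGA2 _; exact: evenR.
- move=> w _; exact: orb_back BA2.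
- move=> w _; exact: orb_back AB2.
Qed.
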